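(* Let $\mathcal C$ be a class of colorings that has the refinement property. Then for every hypergraph $H$ with $n\ge1$ vertices, $\mathrm{ch}_{\mathcal C}(H)\le\chi_{\mathcal C}(H)\cdot\ln n+1$.
   Context: A class of colorings $\mathcal C$ specifies, for each hypergraph $H=(V,\mathcal E)$, a set of colorings $V\to\mathbb Z_{>0}$ called $\mathcal C$-colorings of $H$. A coloring $C'$ is a refinement of a coloring $C$ if $C(x)\ne C(y)$ implies $C'(x)\ne C'(y)$. $\mathcal C$ has the refinement property if every refinement of a $\mathcal C$-coloring of $H$ is also a $\mathcal C$-coloring of $H$. $\chi_{\mathcal C}(H)$ is the minimum number of colors used by a $\mathcal C$-coloring of $H$ (assumed to exist). $\mathrm{ch}_{\mathcal C}(H)$ is the minimum $k$ such that for every family $\{L_v\}_{v\in V}$ of sets of positive integers with $|L_v|\ge k$, there is a $\mathcal C$-coloring $C$ of $H$ with $C(v)\in L_v$ for all $v$. *)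

(* Defs.v *)
From Stdlib Require Import Reals.
From mathcomp Require Import all_boot.
Set Implicit Arguments. Unset Strict Implicit. Unset Printing Implicit Defensive.

(* A hypergraph is H = (V, E) with V : finType and E : {set {set V}}. *)

Definition is_coloring (V : finType) (c : V -> nat) : Prop := forall v, 0 < c v.

Definition coloring_class :=
  forall (V : finType), {set {set V}} -> (V -> nat) -> Prop.

Definition class_wf (C : coloring_class) : Prop :=
  forall (V : finType) (E : {set {set V}}) (c : V -> nat),
    C V E c -> is_coloring c.

Definition refines (V : finType) (c' c : V -> nat) : Prop :=
  forall x y, c x <> c y -> c' x <> c' y.

Definition refinement_property (C : coloring_class) : Prop :=
  forall (V : finType) (E : {set {set V}}) (c c' : V -> nat),
    C V E c -> is_coloring c' -> refines c' c -> C V E c'.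

Definition num_colors (V : finType) (c : V -> nat) : nat :=
  size (undup [seq c x | x <- enum V]).

Definition is_chi (C : coloring_class) (V : finType) (E : {set {set V}}) (k : nat)
  : Prop :=
  (exists c, C V E c /\ num_colors c = k) /\
  (forall c, C V E c -> k <= num_colors c).

Definition list_of_size_ge (L : nat -> Prop) (k : nat) : Prop :=
  (forall x, L x -> 0 < x) /\
  exists s : seq nat, uniq s /\ k <= size s /\ (forall x, x \in s -> L x).

Definition choosable (C : coloring_class) (V : finType) (E : {set {set V}}) (k : nat)
  : Prop :=
  forall L : V -> nat -> Prop,
    (forall v, list_of_size_ge (L v) k) ->
    exists c, C V E c /\ forall v, L v (c v).

Definition is_ch (C : coloring_class) (V : finType) (E : {set {set V}}) (m : nat)
  : Prop :=
  choosable C E m /\ (forall k, choosable C E k -> m <= k).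

(* Main.v *)
Require Import Defs.
From Stdlib Require Import Reals ZArith Lra ClassicalEpsilon.
From mathcomp Require Import all_boot.
Set Implicit Arguments. Unset Strict Implicit. Unset Printing Implicit Defensive.

Section RealS.
Local Open Scope R_scope.
Lemma exp_pow_nat (a : R) (k : nat) : exp a ^ k = exp (INR k * a).
Proof.
induction k as [|k IH].
- simpl. rewrite Rmult_0_l exp_0; reflexivity.
- change (exp a ^ S k) with (exp a * exp a ^ k). rewrite IH S_INR -exp_plus. f_equal. ring.
Qed.

Lemma ln_nonneg (n : R) : 1 <= n -> 0 <= ln n.
Proof.
intros h. destruct (Rle_lt_or_eq_dec 1 n h) as [h'|h'].
- rewrite -ln_1. left. apply ln_increasing; lra.
- subst. rewrite ln_1. lra.
Qed.

Lemma real_part (n q : R) (k : nat) : 1 <= n -> 1 <= q -> q * ln n < INR k ->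
  n * (q - 1) ^ k < q ^ k.
Proof.
intros hn hq hk.
assert (hq0 : 0 < q) by lra.
assert (e1 : q - 1 = q * (1 - / q)) by (field; lra).
assert (hi : / q <= 1) by (rewrite -Rinv_1; apply Rinv_le_contravar; lra).
assert (hi0 : 0 < / q) by (apply Rinv_0_lt_compat; lra).
assert (h1 : 0 <= 1 - / q <= exp (- / q)).
{ split. lra. pose proof (exp_ineq1_le (- / q)). lra. }
assert (h2 := pow_incr _ _ k h1).
rewrite exp_pow_nat in h2.
assert (h4 : exp (INR k * - / q) < / n).
{ rewrite -{1}(exp_ln n); last lra. rewrite -exp_Ropp. apply exp_increasing.
  assert (INR k * / q > ln n).
  { apply (Rmult_lt_reg_l q); [lra|]. replace (q * (INR k * / q)) with (INR k) by (field; lra). lra. }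
  lra. }
assert (hqk : 0 < q ^ k) by (apply pow_lt; lra).
rewrite e1 Rpow_mult_distr.
assert (hn0 : 0 < n) by lra.
assert (n * (q ^ k * (1 - / q) ^ k) <= n * (q ^ k * exp (INR k * - / q))).
{ apply Rmult_le_compat_l; [lra|]. apply Rmult_le_compat_l; lra. }
assert (n * (q ^ k * exp (INR k * - / q)) < n * (q ^ k * / n)).
{ apply Rmult_lt_compat_l; [lra|]. apply Rmult_lt_compat_l; lra. }
replace (n * (q ^ k * / n)) with (q ^ k) in H0 by (field; lra).
lra.
Qed.
End RealS.
Section Key.
Variable m : nat.
Hypothesis m0 : 0 < m.

Definition wt (U A : seq nat) := (m.-1) ^ (size A) * m ^ (size U - size A).
Definition Phi (U : seq nat) (R : seq (nat * seq nat)) := \sum_(r <- R) wt U r.2.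
Definition okR (U : seq nat) (R : seq (nat * seq nat)) :=
  forall r, r \in R -> [/\ r.1 < m, uniq r.2 & {subset r.2 <= U}].

Lemma key U : uniq U -> forall R, okR U R -> Phi U R < m ^ size U ->
  exists f : nat -> nat, forall r, r \in R -> has (fun x => f x == r.1) r.2.
Proof.
elim: U => [|x U IH] /= uU R okr hP.
  exists id => r rR; exfalso.
  have [_ _ sub] := okr r rR.
  have e2 : r.2 = [::].
    by case: (r.2) sub => // y s /(_ y); rewrite inE eqxx => /(_ isT).
  move: hP; rewrite /Phi (big_rem r rR) /= /wt e2 /=.
  by rewrite expn0 mul1n sub0n expn0.
move/andP: uU => [xU uU].
pose Rj (j : nat) := [seq (r.1, [seq y <- r.2 | y != x]) |
                       r <- R & ~~ ((x \in r.2) && (r.1 == j))].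
have okj j : okR U (Rj j).
  move=> r /mapP [r0]; rewrite mem_filter => /andP [_ r0R] ->.
  have [h1 h2 h3] := okr r0 r0R; split => //=; first exact: filter_uniq.
  move=> y; rewrite mem_filter => /andP [yx /h3]; rewrite inE.
  by case/orP => // /eqP yx'; rewrite yx' eqxx in yx.
have sumE : \sum_(j < m) Phi U (Rj j) = Phi (x :: U) R.
  rewrite /Phi.
  rewrite (eq_bigr (fun j : 'I_m => \sum_(r <- R | ~~ ((x \in r.2) && (r.1 == j))) wt U [seq y <- r.2 | y != x])); last by move=> j _; rewrite /Rj big_map big_filter.
  idtac.
  rewrite (exchange_big_dep xpredT) //=.
  apply: eq_big_seq => r rR.
  have [h1 h2 h3] := okr r rR.
  case xr: (x \in r.2) => /=.
    have sz : size [seq y <- r.2 | y != x] = (size r.2).-1.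
      have := count_uniq_mem x h2; rewrite xr.
      rewrite size_filter -(count_predC (pred1 x) r.2).
      by move=> ->; rewrite add1n.
    have szU : size r.2 <= (size U).+1.
      by have := uniq_leq_size h2 h3; rewrite /=.
    have a1 : 0 < size r.2 by case: (r.2) xr.
    rewrite /wt sz /=.
    rewrite (eq_bigl (predC1 (Ordinal h1))); last first.
      by move=> i; rewrite /= -val_eqE /= eq_sym.
    rewrite sum_nat_const cardC1 card_ord.
    case: (size r.2) a1 szU => // a' _ szU.
    by rewrite /= subSS expnS mulnA.
  have fe : [seq y <- r.2 | y != x] = r.2.
    apply/all_filterP/allP => y yr; apply/negP => /eqP e.
    by move: xr; rewrite -e yr.
  have szU : size r.2 <= size U.
    apply: uniq_leq_size => // y yr; have := h3 y yr; rewrite inE.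
    by case/orP => // /eqP e; move: xr; rewrite -e yr.
  rewrite fe sum_nat_const card_ord /wt /= subSn // expnS.
  by rewrite mulnCA.
have [j hj] : exists j : 'I_m, Phi U (Rj j) < m ^ size U.
  case: (boolP [exists j : 'I_m, Phi U (Rj j) < m ^ size U]) => [/existsP //|].
  rewrite negb_exists => /forallP hall; exfalso.
  move: hP; rewrite -sumE expnS.
  have : \sum_(j < m) m ^ size U <= \sum_(j < m) Phi U (Rj j).
    by apply: leq_sum => i _; rewrite leqNgt; apply: hall.
  by rewrite sum_nat_const card_ord => h1 h2; move: (leq_ltn_trans h1 h2); rewrite ltnn.
have [f hf] := IH uU _ (okj j) hj.
exists (fun y => if y == x then nat_of_ord j else f y) => r rR.
case e: ((x \in r.2) && (r.1 == j)).
  case/andP: e => xr /eqP ->; apply/hasP; exists x => //; by rewrite eqxx.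
have : (r.1, [seq y <- r.2 | y != x]) \in Rj j.
  by apply/mapP; exists r => //; rewrite mem_filter e.
move/hf => /hasP [y]; rewrite mem_filter /= => /andP [yx yr] fy.
by apply/hasP; exists y => //; rewrite (negbTE yx).
Qed.
End Key.

Lemma choosable_of (C : coloring_class) (hC : refinement_property C)
  (V : finType) (E : {set {set V}}) (hn : 0 < #|V|) (c0 : V -> nat)
  (hc0 : C V E c0) (k : nat)
  (hk : #|V| * (num_colors c0).-1 ^ k < num_colors c0 ^ k) : choosable C E k.
Proof.
move=> L hL.
pose S v := proj1_sig (constructive_indefinite_description _ (proj2 (hL v))).
have hS v : uniq (S v) /\ k <= size (S v) /\ (forall x, x \in S v -> L v x).
  exact: (proj2_sig (constructive_indefinite_description _ (proj2 (hL v)))).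
pose A v := take k (S v).
have Au v : uniq (A v) by apply: take_uniq; case: (hS v).
have As v : size (A v) = k.
  by rewrite size_take; case: (hS v) => _ [h _]; case: ltngtP h => // ->.
have AL v x : x \in A v -> L v x.
  by move/mem_take; case: (hS v) => _ [_]; apply.
pose cols := undup [seq c0 x | x <- enum V].
pose m := size cols.
have inc v : c0 v \in cols by rewrite mem_undup; apply: map_f; rewrite mem_enum.
pose i v := index (c0 v) cols.
have im v : i v < m by rewrite /i /m index_mem.
have m0 : 0 < m.
  by case/card_gt0P: hn => v _; apply: leq_ltn_trans (im v).
pose U := undup (flatten [seq A v | v <- enum V]).
have AU v : {subset A v <= U}.
  move=> x xA; rewrite mem_undup; apply/flattenP; exists (A v) => //.
  by apply: map_f; rewrite mem_enum.
pose R := [seq (i v, A v) | v <- enum V].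
have okr : okR m U R.
  move=> r /mapP [v _ ->]; split => /=; [exact: im | exact: Au | exact: AU].
have ku : k <= size U.
  case/card_gt0P: hn => v _; rewrite -(As v); apply: uniq_leq_size => //.
have hP : Phi m U R < m ^ size U.
  rewrite /Phi big_map.
  rewrite (eq_bigr (fun _ => (m.-1) ^ k * m ^ (size U - k))); last first.
    by move=> v _; rewrite /wt As.
  rewrite big_enum sum_nat_const cardT -cardE.
  rewrite -(subnKC ku) expnD (addKn) mulnA ltn_pmul2r //.
  by rewrite expn_gt0 m0.
have [f hf] := @key m U (undup_uniq _) R okr hP.
have hv v : has (fun x => f x == i v) (A v).
  by apply: (hf (i v, A v)); apply: map_f; rewrite mem_enum.
pose c' v := nth 0 (A v) (find (fun x => f x == i v) (A v)).
have c'A v : c' v \in A v by rewrite mem_nth // -has_find.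
have fc v : f (c' v) = i v by apply/eqP; exact: (nth_find 0 (hv v)).
exists c'; split; last by move=> v; apply: AL.
apply: (hC _ _ c0 c') => //.
  by move=> v; case: (hL v) => h _; apply: h; apply: AL.
move=> x y hxy exy; apply: hxy.
have : i x = i y by rewrite -fc exy fc.
move=> eij.
by rewrite -(nth_index 0 (inc x)) -(nth_index 0 (inc y)); congr nth.
Qed.

Lemma INR_expn (a k : nat) : INR (a ^ k) = pow (INR a) k.
Proof.
elim: k => [|k IH]; first by rewrite expn0.
by rewrite expnS -multE mult_INR IH.
Qed.

Theorem theorem6p2 (C : coloring_class) (hwf : class_wf C)
  (hC : refinement_property C)
  (V : finType) (E : {set {set V}}) (hn : 0 < #|V|)
  (chi ch : nat) (hchi : is_chi C E chi) (hch : is_ch C E ch) :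
  Rle (INR ch) (Rplus (Rmult (INR chi) (ln (INR #|V|))) (INR 1)).
Proof.
case: hchi => [[c0 [hc0 e0]] _]; case: hch => _ hmin.
have chi1 : 0 < chi.
  rewrite -e0 /num_colors; case/card_gt0P: hn => v _.
  have hv : c0 v \in undup [seq c0 x | x <- enum V].
    by rewrite mem_undup map_f // mem_enum.
  by case: (undup _) hv.
have n1 : Rle R1 (INR #|V|) by apply: (le_INR 1); apply/leP.
pose r := Rmult (INR chi) (ln (INR #|V|)).
have [hu1 hu2] := archimed r.
have r0 : Rle R0 r := Rmult_le_pos _ _ (pos_INR _) (ln_nonneg n1).
have uz : (0 <= up r)%Z.
  apply: Z.lt_le_incl; apply: lt_0_IZR; lra.
pose k := Z.to_nat (up r).
have ek : INR k = IZR (up r) by rewrite INR_IZR_INZ Z2Nat.id.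
have hk : #|V| * (num_colors c0).-1 ^ k < num_colors c0 ^ k.
  rewrite e0; apply/ltP; apply: INR_lt; rewrite -multE !mult_INR !INR_expn.
  have e1 : INR chi.-1 = Rminus (INR chi) R1.
    by rewrite -{2}(prednK chi1) S_INR; ring.
  rewrite e1; apply: real_part => //.
    by apply: (le_INR 1); apply/leP.
  by rewrite ek.
have chk := hmin k (choosable_of hC hn hc0 hk).
have := le_INR _ _ (elimT leP chk); rewrite ek /= => h.
rewrite -/r; lra.
Qed.
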